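(* Let $\Delta$ be a finite set of defaults such that $\Delta^\rightarrow$ is consistent, and suppose $\Delta$ has Z-partition $(\Delta_0,\ldots,\Delta_n)$. Then for all $\theta,\phi\in L$: $\theta\mid\!\sim^\Delta_{lex}\phi$ if and only if $\phi\in Bel\big((\cdots((\preceq_\emptyset*\preceq_{\Delta^\rightarrow_0})*\preceq_{\Delta^\rightarrow_1})*\cdots*\preceq_{\Delta^\rightarrow_n})*\preceq_{\{\theta\}}\big)$.
   Context: $L$ is a propositional language built from a finite set of propositional variables with the connectives $\neg,\wedge,\vee,\rightarrow,\top,\bot$; $W$ is the finite set of propositional worlds. For $\theta\in L$, $S_\theta=\{w\in W\mid w\models\theta\}$; $E\models\phi$ means $\bigcap_{\theta\in E}S_\theta\subseteq S_\phi$; $\models\phi$ means $\emptyset\models\phi$; $E$ is consistent iff $E\not\models\bot$. Defaults: expressions $\lambda\Rightarrow\chi$ with $\lambda,\chi\in L$; for a set $\Gamma$ of defaults $\Gamma^\rightarrow=\{\lambda\rightarrow\chi\mid\lambda\Rightarrow\chi\in\Gamma\}$. $\lambda\Rightarrow\chi$ is tolerated by $\Gamma$ iff $\{\lambda\wedge\chi\}\cup\Gamma^\rightarrow$ is consistent. Z-partition of $\Delta$: $\Delta_0$ is the set of defaults of $\Delta$ tolerated by $\Delta$; for $i\ge1$, $\Delta_i$ is the set of defaults of $\Delta\setminus(\Delta_0\cup\cdots\cup\Delta_{i-1})$ tolerated by $\Delta\setminus(\Delta_0\cup\cdots\cup\Delta_{i-1})$; stop at the first $n$ with $\Delta_0\cup\cdots\cup\Delta_n=\Delta$.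 Lexicographic closure: for $A,B\subseteq\Delta$, with $A_i=A\cap\Delta_i$, $B_i=B\cap\Delta_i$, $A\ll_{lex}B$ iff there is $i$ with $|A_i|<|B_i|$ and $|A_j|=|B_j|$ for all $j>i$. $\theta\mid\!\sim^\Delta_{lex}\phi$ iff for every $\Gamma\subseteq\Delta$ such that $\Gamma^\rightarrow\cup\{\theta\}$ is consistent and $\Gamma$ is $\ll_{lex}$-maximal among such subsets, $\Gamma^\rightarrow\cup\{\theta\}\models\phi$. E-relation: a relation $\preceq\subseteq L\times L$ such that for all $\theta,\phi,\psi$: (E1) transitivity; (E2) $\theta\models\phi$ implies $\theta\preceq\phi$; (E3) $\theta\preceq\theta\wedge\phi$ or $\phi\preceq\theta\wedge\phi$; (E4) if $\bot\prec\psi$ for some $\psi$, then $\theta\preceq\phi$ for all $\theta$ implies $\models\phi$; $\prec$ is the strict part. $Bel(\preceq)=\{\theta\mid\bot\prec\theta\}$ if $\bot\prec\theta$ for some $\theta$, else $Bel(\preceq)=L$. Sequences: finite sequences $\vec{\mathcal U}=(\mathcal U_0,\ldots,\mathcal U_k)$ of mutually disjoint subsets of $W$ (components may be empty, possibly repeatedly). $\mathrm{rank}^{\vec{\mathcal U}}(\theta)$ is the least $i$ with $\mathcal U_i\cap S_\theta\neq\emptyset$, $\infty$ if none. $\theta\mid\!\sim_{\vec{\mathcal U}}\phi$ iff $\mathrm{rank}^{\vec{\mathcal U}}(\theta)<\mathrm{rank}^{\vec{\mathcal U}}(\theta\wedge\neg\phi)$ or $\mathrm{rank}^{\vec{\mathcal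 U}}(\theta)=\infty$. $\vec{\mathcal U}$ is full iff $\bigcup_i\mathcal U_i=W$, empty iff $\bigcup_i\mathcal U_i=\emptyset$; $\Upsilon$ is the set of full or empty sequences. For $\vec{\mathcal U}\in\Upsilon$, $\theta\preceq_{\vec{\mathcal U}}\phi$ iff (not $\neg\theta\vee\neg\phi\mid\!\sim_{\vec{\mathcal U}}\theta$) or $\neg\phi\mid\!\sim_{\vec{\mathcal U}}\bot$. Sequence revision: if $\vec{\mathcal U}$ is full, $\vec{\mathcal U}*\vec{\mathcal V}=(\mathcal U_0\cap\mathcal V_0,\ldots,\mathcal U_k\cap\mathcal V_0,\ \ldots,\ \mathcal U_0\cap\mathcal V_m,\ldots,\mathcal U_k\cap\mathcal V_m)$ for $\vec{\mathcal V}=(\mathcal V_0,\ldots,\mathcal V_m)$; otherwise $\vec{\mathcal U}*\vec{\mathcal V}=\vec{\mathcal V}$. Revision of E-relations: every E-relation equals $\preceq_{\vec{\mathcal U}}$ for some $\vec{\mathcal U}\in\Upsilon$, and $\preceq_K*\preceq_E:=\preceq_{\vec{\mathcal U}*\vec{\mathcal V}}$ for any $\vec{\mathcal U},\vec{\mathcal V}\in\Upsilon$ with $\preceq_K=\preceq_{\vec{\mathcal U}}$, $\preceq_E=\preceq_{\vec{\mathcal V}}$ (independent of the choice). Relation generated by a finite set $E\subseteq L$: $\theta\prec_E\phi$ iff $E\not\models\bot$, $\not\models\theta$, and for every $E'\subseteq E$ with $E'\cup\{\neg\phi\}$ consistent there is $E''\subseteq E$ with $|E'|<|E''|$ and $E''\cup\{\neg\theta\}$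 consistent; $\theta\preceq_E\phi$ iff not $\phi\prec_E\theta$. ($\preceq_E$ is an E-relation.) *)

(* Defs.v *)
From HB Require Import structures.
From mathcomp Require Import all_boot.
From mathcomp Require Import finmap.

Set Implicit Arguments.
Unset Strict Implicit.
Unset Printing Implicit Defensive.

Local Open Scope fset_scope.

Section Logic.
Variable V : finType.

Inductive form : Type :=
  | Var of V
  | Neg of form
  | And of form & form
  | Or  of form & form
  | Imp of form & form
  | Top
  | Bot.

Fixpoint form_enc (f : form) : GenTree.tree V :=
  match f with
  | Var v => GenTree.Leaf v
  | Neg a => GenTree.Node 0 [:: form_enc a]
  | And a b => GenTree.Node 1 [:: form_enc a; form_enc b]
  | Or a b => GenTree.Node 2 [:: form_enc a; form_enc b]
  | Imp a b => GenTree.Node 3 [:: form_enc a; form_enc b]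
  | Top => GenTree.Node 4 [::]
  | Bot => GenTree.Node 5 [::]
  end.

Fixpoint form_dec (t : GenTree.tree V) : option form :=
  match t with
  | GenTree.Leaf v => Some (Var v)
  | GenTree.Node 0 [:: a] => omap Neg (form_dec a)
  | GenTree.Node 1 [:: a; b] =>
      if form_dec a is Some x then omap (And x) (form_dec b) else None
  | GenTree.Node 2 [:: a; b] =>
      if form_dec a is Some x then omap (Or x) (form_dec b) else None
  | GenTree.Node 3 [:: a; b] =>
      if form_dec a is Some x then omap (Imp x) (form_dec b) else None
  | GenTree.Node 4 [::] => Some Top
  | GenTree.Node 5 [::] => Some Bot
  | _ => None
  end.

Lemma form_encK : pcancel form_enc form_dec.
Proof. by elim=> //= [a -> |a -> b ->|a -> b ->|a -> b ->]. Qed.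

HB.instance Definition _ := Countable.copy form (pcan_type form_encK).

Definition world := {ffun V -> bool}.

Fixpoint sat (w : world) (f : form) : bool :=
  match f with
  | Var v => w v
  | Neg a => ~~ sat w a
  | And a b => sat w a && sat w b
  | Or a b => sat w a || sat w b
  | Imp a b => sat w a ==> sat w b
  | Top => true
  | Bot => false
  end.

Definition Sf (f : form) : {set world} := [set w | sat w f].

Definition models (E : {fset form}) (phi : form) : bool :=
  [forall w : world, all (sat w) E ==> sat w phi].

Definition valid (phi : form) : bool := models fset0 phi.

Definition consistent (E : {fset form}) : bool := ~~ models E Bot.

(* a default  lambda => chi  is the pair (lambda, chi) *)
Definition default := (form * form)%type.

Definition imps (G : {fset default}) : {fset form} :=
  [fset Imp d.1 d.2 | d in G].

Definition tolerated (d : default) (G : {fset default}) : bool :=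
  consistent ([fset And d.1 d.2] `|` imps G).

Definition tol_part (G : {fset default}) : {fset default} :=
  [fset d in G | tolerated d G].

(* remaining defaults  Delta \ (Delta_0 u ... u Delta_{i-1}) *)
Fixpoint zrest (D : {fset default}) (i : nat) : {fset default} :=
  match i with
  | 0 => D
  | i.+1 => zrest D i `\` tol_part (zrest D i)
  end.

Definition zlayer (D : {fset default}) (i : nat) : {fset default} :=
  tol_part (zrest D i).

Fixpoint zupto (D : {fset default}) (m : nat) : {fset default} :=
  match m with
  | 0 => zlayer D 0
  | m.+1 => zupto D m `|` zlayer D m.+1
  end.

Definition is_zpartition (D : {fset default}) (n : nat) : Prop :=
  zupto D n = D /\ (forall m, m < n -> zupto D m <> D).

Definition lexlt (D : {fset default}) (n : nat) (A B : {fset default}) : Prop :=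
  exists i, i <= n /\
    #|` A `&` zlayer D i| < #|` B `&` zlayer D i| /\
    (forall j, i < j <= n -> #|` A `&` zlayer D j| = #|` B `&` zlayer D j|).

Definition lex_entails (D : {fset default}) (n : nat) (theta phi : form) : Prop :=
  forall G : {fset default},
    G `<=` D ->
    consistent (imps G `|` [fset theta]) ->
    (forall G' : {fset default}, G' `<=` D ->
        consistent (imps G' `|` [fset theta]) -> ~ lexlt D n G G') ->
    models (imps G `|` [fset theta]) phi.

Definition erel := form -> form -> Prop.

Definition strict (R : erel) : erel := fun a b => R a b /\ ~ R b a.

Definition Bel (R : erel) (phi : form) : Prop :=
  (exists psi, strict R Bot psi) -> strict R Bot phi.

Local Close Scope fset_scope.
Definition wseq := seq {set world}.

Definition rank (U : wseq) (f : form) : option nat :=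
  if has (fun X => X :&: Sf f != set0) U
  then Some (find (fun X => X :&: Sf f != set0) U) else None.

(* strict order on nat u {infinity}, infinity = None *)
Definition ltr_inf (a b : option nat) : bool :=
  match a, b with
  | Some x, Some y => x < y
  | Some _, None => true
  | None, _ => false
  end.

Definition nm (U : wseq) (theta phi : form) : Prop :=
  ltr_inf (rank U theta) (rank U (And theta (Neg phi))) \/ rank U theta = None.

Definition mutually_disjoint (U : wseq) : Prop :=
  forall i j, i < size U -> j < size U -> i != j ->
    [disjoint nth set0 U i & nth set0 U j].

Definition full (U : wseq) : bool := \bigcup_(X <- U) X == setT.
Definition wempty (U : wseq) : bool := \bigcup_(X <- U) X == set0.

Definition Upsilon (U : wseq) : Prop :=
  0 < size U /\ mutually_disjoint U /\ (full U || wempty U).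

Definition prec_seq (U : wseq) : erel := fun theta phi =>
  ~ nm U (Or (Neg theta) (Neg phi)) theta \/ nm U (Neg phi) Bot.

Definition seq_rev (U W' : wseq) : wseq :=
  if full U then flatten [seq [seq X :&: Y | X <- U] | Y <- W'] else W'.

Definition same_rel (R S : erel) : Prop := forall a b, R a b <-> S a b.

(* revision of E-relations: R1 * R2 := prec_{U * V} for U, V in Upsilon
   with R1 = prec_U and R2 = prec_V (independent of the choice) *)
Definition Erev (R1 R2 : erel) : erel := fun theta phi =>
  exists U W', Upsilon U /\ Upsilon W' /\
    same_rel (prec_seq U) R1 /\ same_rel (prec_seq W') R2 /\
    prec_seq (seq_rev U W') theta phi.

Local Open Scope fset_scope.
Definition strict_gen (E : {fset form}) (theta phi : form) : Prop :=
  consistent E /\ ~~ valid theta /\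
  forall E' : {fset form}, E' `<=` E -> consistent (E' `|` [fset Neg phi]) ->
    exists2 E'' : {fset form}, E'' `<=` E &
      #|` E'| < #|` E''| /\ consistent (E'' `|` [fset Neg theta]).

Definition prec_gen (E : {fset form}) : erel := fun theta phi =>
  ~ strict_gen E phi theta.

Definition zrev (D : {fset default}) (n : nat) : erel :=
  foldl (fun R i => Erev R (prec_gen (imps (zlayer D i))))
        (prec_gen fset0) (iota 0 n.+1).

End Logic.

(* Main.v *)
Require Import Defs.
From mathcomp Require Import all_boot finmap zify.
From Stdlib Require Import Classical.
Local Open Scope fset_scope.
Set Implicit Arguments. Unset Strict Implicit.
Local Open Scope nat_scope.
Section S.
Variable V : finType.
Implicit Types (E : {fset form V}) (G : {fset default V}) (w : world V) (U : wseq V) (f g a b : form V).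

Lemma consP E : reflect (exists w, forall e, e \in E -> sat w e) (consistent E).
Proof.
rewrite /consistent /models negb_forall; apply: (iffP existsP) => [[w]|[w H]].
  by rewrite implybF negbK => /allP; exists w.
by exists w; rewrite implybF negbK; apply/allP.
Qed.

Lemma validPn phi : reflect (exists w, ~~ sat w phi) (~~ valid phi).
Proof.
rewrite /valid /models negb_forall; apply: (iffP existsP) => [[w]|[w H]].
  by rewrite negb_imply => /andP[_ ?]; exists w.
by exists w; rewrite negb_imply H andbT; apply/allP.
Qed.

Lemma imps_card G : #|` imps G| = #|` G|.
Proof.
by rewrite /imps card_imfset //= => -[a b] [c d] [-> ->].
Qed.

Lemma impsP G e : reflect (exists2 d, d \in G & e = Imp d.1 d.2) (e \in imps G).
Proof. exact: imfsetP. Qed.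

Lemma imps_in G d : d \in G -> Imp d.1 d.2 \in imps G.
Proof. by move=> h; apply/impsP; exists d. Qed.

Lemma imps_le G G' : G `<=` G' -> #|` imps G| <= #|` G'|.
Proof. by move=> h; rewrite imps_card fsubset_leq_card. Qed.

Definition rk (U : wseq V) w := find (fun X : {set world V} => w \in X) U.
Definition domr (r : world V -> nat) (a b : form V) : Prop :=
  forall v, ~~ sat v b -> exists2 w, ~~ sat w a & r w <= r v.
Definition allin (U : wseq V) := forall w, has (fun X : {set world V} => w \in X) U.

Lemma in_Sf f w : (w \in Sf f) = sat w f.
Proof. by rewrite /Sf inE. Qed.

Lemma rk_le U w k : w \in nth (set0 : {set world V}) U k -> rk U w <= k.
Proof.
move=> h; rewrite leqNgt; apply/negP => /(before_find (set0 : {set world V})); by rewrite h.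
Qed.

Lemma rank_hasE U f :
  has (fun X : {set world V} => X :&: Sf f != set0) U = [exists w, sat w f && has (fun X : {set world V} => w \in X) U].
Proof.
apply/hasP/existsP => [[X XU /set0Pn [w]]|[w /andP[sw /hasP[X XU wX]]]].
  by rewrite in_setI in_Sf => /andP[wX sw]; exists w; rewrite sw; apply/hasP; exists X.
by exists X => //; apply/set0Pn; exists w; rewrite in_setI in_Sf wX.
Qed.

Lemma rank_none U f : allin U -> rank U f = None <-> forall w, ~~ sat w f.
Proof.
move=> Hall; rewrite /rank rank_hasE; split.
  case: existsP => // H _ w; apply/negP => sw; apply: H; exists w; by rewrite sw Hall.
move=> H; case: existsP => // -[w]; by rewrite (negbTE (H w)).
Qed.

Lemma rank_some U f k : rank U f = Some k ->
  (exists w, sat w f /\ rk U w = k) /\ (forall w, sat w f -> has (fun X : {set world V} => w \in X) U -> k <= rk U w).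
Proof.
rewrite /rank; case: ifP => // Hh [<-].
have kmin : forall w, sat w f -> has (fun X : {set world V} => w \in X) U -> find (fun X : {set world V} => X :&: Sf f != set0) U <= rk U w.
  move=> w sw hw; rewrite leqNgt; apply/negP => /(before_find (set0 : {set world V})) /= /negbT /negP; apply.
  by apply/set0Pn; exists w; rewrite in_setI in_Sf sw andbT; apply: (nth_find _ hw).
split => //.
have := nth_find (set0 : {set world V}) Hh => /= /set0Pn [w]; rewrite in_setI in_Sf => /andP[wX sw].
have rle := rk_le wX.
exists w; split => //; apply/eqP; rewrite eqn_leq rle kmin //.
by rewrite has_find (leq_ltn_trans rle) // -has_find.
Qed.

Lemma ltr_rank U f g : allin U ->
  ltr_inf (rank U f) (rank U g) <-> exists w, sat w f /\ forall v, sat v g -> rk U w < rk U v.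
Proof.
move=> Hall; case Ef: (rank U f) => [k|]; last first.
  split => //= -[w [sw _]]; by move/(rank_none _ Hall): Ef => /(_ w); rewrite sw.
have [[wf [swf rf]] kmin] := rank_some Ef.
case Eg: (rank U g) => [l|] /=.
  have [[wg [swg rg]] lmin] := rank_some Eg.
  split => [kl|[w [sw H]]].
    exists wf; split => // v sv; rewrite rf (leq_trans kl) //; exact: lmin.
  by rewrite -rg (leq_trans _ (H _ swg)) // ltnS kmin.
split => // _; exists wf; split => // v sv.
by move/(rank_none _ Hall): Eg => /(_ v); rewrite sv.
Qed.

Lemma prec_seq_char U a b : allin U -> prec_seq U a b <-> domr (rk U) a b.
Proof.
move=> Hall; rewrite /prec_seq /nm.
have E1 : ltr_inf (rank U (Neg b)) (rank U (And (Neg b) (Neg (Bot V)))) \/ rank U (Neg b) = None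
   <-> forall w, sat w b.
  rewrite ltr_rank // rank_none //; split.
    case=> [[w [sw H]]|H w]; last by move: (H w) => /= /negbNE.
    by move: (H w); rewrite /= andbT ltnn; move/(_ sw).
  by move=> H; right => w /=; rewrite H.
rewrite E1 ltr_rank // rank_none //; split.
  case=> [H|H] v svb; last by move: (H v); rewrite (negbTE svb).
  apply: NNPP => Hn; apply: H; left; exists v; split; first by rewrite /= svb orbT.
  move=> w /= /andP[_ swa]; rewrite ltnNge; apply/negP => le; apply: Hn.
  by exists w.
move=> H; case: (classic (forall w, sat w b)) => [Hb|Hb]; [by right|left].
case=> [[w [sw Hw]]|Hw].
  move: sw => /= /orP[swa|swb].
    by move: (Hw w); rewrite /= swa ltnn => /(_ isT).
  have [w' sw' le] := H w swb.
  by move: (Hw w'); rewrite /= sw' /= => /(_ isT); rewrite ltnNge le.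
apply: Hb => w; apply: NNPP => /negP swb; have [w' sw' _] := H w swb.
by move: (Hw w') => /=; rewrite sw'.
Qed.

Lemma prec_seq_empty U a b : (forall w, ~~ has (fun X : {set world V} => w \in X) U) -> prec_seq U a b.
Proof.
move=> H; right; right; rewrite /rank rank_hasE; case: existsP => // -[w /andP[_ hw]].
by move: (H w); rewrite hw.
Qed.

Definition lit (w : world V) (x : V) : form V := if w x then Var x else Neg (Var x).
Definition chi (w : world V) : form V := foldr (fun x f => And (lit w x) f) (Top V) (enum V).

Lemma sat_chi w u : sat u (chi w) = (u == w).
Proof.
have -> : sat u (chi w) = all (fun x => u x == w x) (enum V).
  rewrite /chi; elim: (enum V) => [|y s IH] //=; rewrite IH; congr (_ && _).
  rewrite /lit; by case: (w y) => /=; case: (u y).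
apply/allP/eqP => [H|->] //; apply/ffunP => x; apply/eqP/H; by rewrite mem_enum.
Qed.

Definition samepre (r r' : world V -> nat) := forall w v, (r w <= r v) = (r' w <= r' v).
Definition same_rel' (R S : erel V) := forall a b, R a b <-> S a b.

Lemma domr_le r w v : domr r (Neg (chi w)) (Neg (chi v)) <-> r w <= r v.
Proof.
split.
  move=> /(_ v); rewrite /= sat_chi eqxx => /(_ isT) [u]; rewrite /= sat_chi negbK => /eqP -> //.
move=> le u; rewrite /= sat_chi negbK => /eqP ->; exists w => //; by rewrite /= sat_chi negbK.
Qed.

Lemma domr_inj r r' : (forall a b, domr r a b <-> domr r' a b) -> samepre r r'.
Proof.
move=> H w v; apply/idP/idP => /domr_le h; apply/domr_le; by apply/H.
Qed.

Lemma domr_same r r' a b : samepre r r' -> domr r a b -> domr r' a b.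
Proof. move=> H h v sv; have [w sw le] := h v sv; exists w => //; by rewrite -H. Qed.

Lemma domr_ext r r' a b : r =1 r' -> domr r a b -> domr r' a b.
Proof. move=> H; apply: domr_same => w v; by rewrite !H. Qed.

Lemma mixed (a b c d N : nat) : b < N -> d < N ->
  (a * N + b <= c * N + d) = (a < c) || ((a == c) && (b <= d)).
Proof.
move=> hb hd; case: (ltngtP a c) => [ac|ca|->] /=.
- apply: (@leq_trans (a.+1 * N)); first by rewrite mulSn [(N + _)%N]addnC leq_add2l ltnW.
  by rewrite (leq_trans (leq_mul ac (leqnn N))) // leq_addr.
- apply/negbTE; rewrite -ltnNge; apply: (@leq_trans (c.+1 * N)).
    by rewrite mulSn [(N + _)%N]addnC ltn_add2l.
  by rewrite (leq_trans (leq_mul ca (leqnn N))) // leq_addr.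
- by rewrite leq_add2l.
Qed.

Lemma samepre_comb r1 r1' r2 r2' N1 N1' :
  (forall w, r1 w < N1) -> (forall w, r1' w < N1') ->
  samepre r1 r1' -> samepre r2 r2' ->
  samepre (fun w => r2 w * N1 + r1 w) (fun w => r2' w * N1' + r1' w).
Proof.
move=> h1 h1' s1 s2 w v; rewrite !mixed // !ltnNge eqn_leq [in RHS]eqn_leq.
by rewrite !s1 !s2.
Qed.

Definition canon (r : world V -> nat) (N : nat) : wseq V :=
  [seq [set w | r w == i] | i <- iota 0 N].

Lemma mem_bigcup U w : (w \in (\bigcup_(X <- U) X)%SET) = has (fun X : {set world V} => w \in X) U.
Proof. elim: U => [|X U IH]; by rewrite ?big_nil ?big_cons ?in_set0 ?in_setU ?IH. Qed.

Lemma full_allin U : full U -> allin U.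
Proof. by move=> /eqP H w; rewrite -mem_bigcup H inE. Qed.

Lemma wempty_none U : wempty U -> forall w, ~~ has (fun X : {set world V} => w \in X) U.
Proof. by move=> /eqP H w; rewrite -mem_bigcup H inE. Qed.

Lemma find_iota k m n : k < n -> find (fun i => m + k == i) (iota m n) = k.
Proof.
elim: n m k => [|n IH] m k //= hk.
case: k hk => [|k] hk; first by rewrite addn0 eqxx.
have -> : (m + k.+1 == m) = false by rewrite -{2}[m]addn0 eqn_add2l.
by rewrite -addSnnS IH.
Qed.

Lemma rk_canon r N w : r w < N -> rk (canon r N) w = r w.
Proof.
move=> h; rewrite /rk /canon find_map.
rewrite (@eq_find _ _ (fun i => 0 + r w == i)) ?find_iota // => i /=.
by rewrite inE add0n.
Qed.

Lemma canon_allin r N : (forall w, r w < N) -> allin (canon r N).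
Proof.
move=> h w; rewrite has_find -/(rk _ w) rk_canon // size_map size_iota //.
Qed.

Lemma canon_Upsilon r N : (forall w, r w < N) -> 0 < N -> Upsilon (canon r N).
Proof.
move=> h N0; split; first by rewrite size_map size_iota.
split; last first.
  apply/orP; left; apply/eqP/setP => w; rewrite mem_bigcup inE; exact: canon_allin.
move=> i j; rewrite size_map size_iota => hi hj ij.
rewrite /canon (nth_map 0) ?size_iota // (nth_map 0) ?size_iota // !nth_iota // !add0n.
rewrite disjoints_subset; apply/subsetP => w; rewrite !inE => /eqP ->. by [].
Qed.

Lemma seq_rev_full U W : full U -> seq_rev U W = flatten [seq [seq X :&: Y | X <- U] | Y <- W].
Proof. by rewrite /seq_rev => ->. Qed.

Lemma rk_rev U W w : allin U -> has (fun X : {set world V} => w \in X) W ->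
  has (fun X : {set world V} => w \in X) (flatten [seq [seq X :&: Y | X <- U] | Y <- W]) /\
  rk (flatten [seq [seq X :&: Y | X <- U] | Y <- W]) w = rk W w * size U + rk U w.
Proof.
move=> hU; elim: W => [|Y W IH] //= hW.
rewrite /rk /= find_cat has_cat !has_map /= size_map.
case wY: (w \in Y) => /=.
  have -> : has (preim (fun X => X :&: Y) (fun X : {set world V} => w \in X)) U.
    by apply: sub_has (hU w) => X /= wX; rewrite in_setI wX wY.
  split => //; rewrite find_map mul0n add0n; apply: eq_find => X /=; by rewrite in_setI wY andbT.
case: ifP => [/hasP [X _ /=]|_]; first by rewrite in_setI wY andbF.
move: hW; rewrite /= wY /= => /IH [h1 h2]; split => //.
rewrite /rk in h2; rewrite h2 mulSn addnA.
by [].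
Qed.

Definition w0 : world V := [ffun=> true].

Lemma domr_TB r : ~ domr r (Top V) (Bot V).
Proof. by move=> /(_ w0 isT) [w]. Qed.

Lemma canon_rel r N : (forall w, r w < N) -> same_rel (prec_seq (canon r N)) (domr r).
Proof.
move=> h a b; rewrite prec_seq_char; last exact: canon_allin.
split; apply: domr_ext => w;
  by rewrite rk_canon.
Qed.

Lemma rep_full U r : Upsilon U -> same_rel (prec_seq U) (domr r) ->
  [/\ full U, allin U, samepre (rk U) r & forall w, rk U w < size U].
Proof.
move=> [_ [_ hU]] hs.
have fU : full U.
  case/orP: hU => // /wempty_none hn; exfalso; apply: (@domr_TB r); apply/hs.
  exact: prec_seq_empty.
have aU := full_allin fU.
split => //; last by move=> w; rewrite -has_find.
apply: domr_inj => a b; rewrite -prec_seq_char //; exact: hs.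
Qed.

Lemma Erev_full R1 R2 r1 r2 N1 N2 :
  (forall w, r1 w < N1) -> (forall w, r2 w < N2) ->
  same_rel R1 (domr r1) -> same_rel R2 (domr r2) ->
  same_rel (Erev R1 R2) (domr (fun w => r2 w * N1 + r1 w)).
Proof.
move=> h1 h2 s1 s2 a b; split.
  case=> U [W [uU [uW [sU [sW P]]]]].
  have [fU aU pU szU] : [/\ full U, allin U, samepre (rk U) r1 & forall w, rk U w < size U].
    by apply: rep_full => // x y; rewrite sU s1.
  have [fW aW pW szW] : [/\ full W, allin W, samepre (rk W) r2 & forall w, rk W w < size W].
    by apply: rep_full => // x y; rewrite sW s2.
  move: P; rewrite seq_rev_full // prec_seq_char; last by move=> w; case: (rk_rev aU (aW w)).
  move=> P; apply: domr_same (samepre_comb szU h1 pU pW) _.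
  by apply: domr_ext P => w; case: (rk_rev aU (aW w)).
move=> H.
have N1p : 0 < N1 by apply: leq_ltn_trans (h1 w0).
have N2p : 0 < N2 by apply: leq_ltn_trans (h2 w0).
exists (canon r1 N1), (canon r2 N2); split; first exact: canon_Upsilon.
split; first exact: canon_Upsilon.
split; first by move=> x y; rewrite canon_rel // s1.
split; first by move=> x y; rewrite canon_rel // s2.
have fU : full (canon r1 N1) by case: (canon_Upsilon h1 N1p) => _ [_ /orP [//|/wempty_none /(_ w0)]]; rewrite canon_allin.
have aU := canon_allin h1; have aW := canon_allin h2.
rewrite seq_rev_full // prec_seq_char; last by move=> w; case: (rk_rev aU (aW w)).
apply: domr_ext H => w; case: (rk_rev aU (aW w)) => _ ->.
by rewrite !rk_canon // size_map size_iota.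
Qed.

Lemma Erev_triv R1 R2 r1 N1 :
  (forall w, r1 w < N1) -> same_rel R1 (domr r1) -> (forall a b, R2 a b) ->
  forall a b, Erev R1 R2 a b.
Proof.
move=> h1 s1 t2 a b.
have N1p : 0 < N1 by apply: leq_ltn_trans (h1 w0).
have fU : full (canon r1 N1) by case: (canon_Upsilon h1 N1p) => _ [_ /orP [//|/wempty_none /(_ w0)]]; rewrite canon_allin.
have e0 : forall w, ~~ has (fun X : {set world V} => w \in X) [:: (set0 : {set world V})] by move=> w; rewrite /= in_set0.
exists (canon r1 N1), [:: set0]; split; first exact: canon_Upsilon.
split.
  split => //; split; first by move=> [|i] [|j].
  by apply/orP; right; apply/eqP/setP => w; rewrite mem_bigcup (negbTE (e0 w)) inE.
split; first by move=> x y; rewrite canon_rel // s1.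
split; first by move=> x y; split => _; [apply: t2 | apply: prec_seq_empty].
rewrite seq_rev_full //; apply: prec_seq_empty => w /=; rewrite cats0 has_map.
by apply/hasP => -[X _ /=]; rewrite setI0 in_set0.
Qed.

Definition satset E w : {fset form V} := [fset e in E | sat w e].
Definition cntE E w := #|` satset E w|.
Definition rho E w := #|` E| - cntE E w.

Lemma in_satset E w e : (e \in satset E w) = (e \in E) && sat w e.
Proof. by rewrite /satset !inE. Qed.

Lemma satset_sub E w : satset E w `<=` E.
Proof. by apply/fsubsetP => e; rewrite in_satset => /andP[]. Qed.

Lemma cntE_le E w : cntE E w <= #|` E|.
Proof. exact: fsubset_leq_card (satset_sub E w). Qed.

Lemma cntE_ge E E' w : E' `<=` E -> (forall e, e \in E' -> sat w e) -> #|` E'| <= cntE E w.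
Proof.
move=> /fsubsetP sE h; apply: fsubset_leq_card; apply/fsubsetP => e eE.
by rewrite in_satset sE // h.
Qed.

Lemma rho_lt E : forall w, rho E w < #|` E|.+1.
Proof. by move=> w; rewrite /rho ltnS leq_subr. Qed.

Lemma consU1P E f : reflect (exists w, (forall e, e \in E -> sat w e) /\ ~~ sat w f)
  (consistent (E `|` [fset Neg f])).
Proof.
apply: (iffP (consP _)) => [[w H]|[w [H1 H2]]].
  exists w; split; first by move=> e eE; apply: H; rewrite in_fsetU eE.
  by have := H (Neg f); rewrite in_fsetU in_fset1 eqxx orbT => /(_ isT).
exists w => e; rewrite in_fsetU in_fset1 => /orP[/H1 //|/eqP ->] //.
Qed.

Lemma prec_gen_char E : consistent E -> same_rel (prec_gen E) (domr (rho E)).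
Proof.
move=> cE a b; rewrite /prec_gen; split; last first.
  move=> H [_ [/validPn [v0 sv0] Hs]].
  suff : forall k, exists2 w, ~~ sat w b & k <= cntE E w.
    by case/(_ (#|` E|.+1)) => w _; rewrite ltnNge cntE_le.
  elim=> [|k [w sw kw]]; first by exists v0.
  have [w' sw' le] := H w sw.
  have hw' : cntE E w <= cntE E w'.
    move: le; rewrite /rho; have := cntE_le E w; have := cntE_le E w'; lia.
  have [|E'' sE'' [lt /consU1P [w'' [h1 h2]]]] := Hs (satset E w') (satset_sub E w').
    apply/consU1P; exists w'; split => // e; by rewrite in_satset => /andP[].
  exists w'' => //; apply: leq_trans (cntE_ge sE'' h1).
  by apply: leq_ltn_trans lt; apply: leq_trans hw'.
move=> Hn v sv; apply: NNPP => Hd; apply: Hn; split => //; split.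
  by apply/validPn; exists v.
move=> E' sE' /consU1P [w [h1 h2]].
exists (satset E v); first exact: satset_sub.
split; last by apply/consU1P; exists v; split => // e; rewrite in_satset => /andP[].
apply: leq_ltn_trans (cntE_ge sE' h1) _; change (cntE E w < cntE E v).
have : ~ rho E w <= rho E v by move=> le; apply: Hd; exists w.
rewrite /rho; have := cntE_le E w; have := cntE_le E v; lia.
Qed.

Lemma prec_gen_incons E a b : ~~ consistent E -> prec_gen E a b.
Proof. by move=> /negP nc [c _]. Qed.

Section Z.
Variable D : {fset default V}.
Definition EL i := imps (zlayer D i).
Fixpoint ZN m := if m is m'.+1 then #|` EL m'|.+1 * ZN m' else 1.
Fixpoint Zkey m w := if m is m'.+1 then rho (EL m') w * ZN m' + Zkey m' w else 0.

Lemma Zkey_lt m w : Zkey m w < ZN m.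
Proof.
elim: m => [|m IH] //=.
have h1 : rho (EL m) w <= #|` EL m| by rewrite -ltnS rho_lt.
have h2 := leq_mul h1 (leqnn (ZN m)).
by rewrite mulSn addnC -addSn leq_add.
Qed.

Lemma zlayer_sub i : zlayer D i `<=` D.
Proof.
have tp : forall G, tol_part G `<=` G.
  by move=> G; apply/fsubsetP => d; rewrite /tol_part !inE => /andP[].
apply: fsubset_trans (tp _) _.
elim: i => [|i IH] /=; first exact: fsubset_refl.
apply: fsubset_trans IH; apply/fsubsetP => d; rewrite in_fsetD => /andP[].
by [].
Qed.

Lemma cons_layer i : consistent (imps D) -> consistent (EL i).
Proof.
move=> /consP [w H]; apply/consP; exists w => e /impsP [d dL ->].
apply: H; apply: imps_in; exact: (fsubsetP (zlayer_sub i)).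
Qed.

Lemma cons0 : consistent (fset0 : {fset form V}).
Proof. by apply/consP; exists w0 => e; rewrite in_fset0. Qed.

Lemma zrev_char m : consistent (imps D) ->
  same_rel (foldl (fun R i => Erev R (prec_gen (imps (zlayer D i)))) (prec_gen fset0) (iota 0 m))
    (domr (Zkey m)).
Proof.
move=> cD; elim: m => [|m IH].
  move=> a b /=; rewrite (prec_gen_char cons0); split; apply: domr_ext => w //.
have -> : iota 0 m.+1 = iota 0 m ++ [:: m] by rewrite -addn1 iotaD.
rewrite foldl_cat /=.
exact: (Erev_full (@Zkey_lt m) (@rho_lt (EL m)) IH (prec_gen_char (cons_layer m cD))).
Qed.
End Z.

Definition lexv n (a b : nat -> nat) : Prop :=
  exists i, i <= n /\ a i < b i /\ (forall j, i < j <= n -> a j = b j).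

Lemma lexv_0 (a b : nat -> nat) : lexv 0 a b <-> a 0 < b 0.
Proof.
split => [[i [hi [lt _]]]|lt]; first by move: hi lt; rewrite leqn0 => /eqP ->.
exists 0; split => //; split => // j /andP[h1 h2]; move: (leq_trans h1 h2); by [].
Qed.

Lemma lexv_S n (a b : nat -> nat) : lexv n.+1 a b <-> a n.+1 < b n.+1 \/ (a n.+1 = b n.+1 /\ lexv n a b).
Proof.
split.
  move=> [i [hi [lt H]]]; move: hi; rewrite leq_eqVlt => /orP[/eqP ei|ilt]; first by left; rewrite -ei.
  right; split; first by apply: H; rewrite ilt leqnn.
  exists i; split; first by rewrite -ltnS.
  split => // j /andP[h1 h2]; apply: H; rewrite h1 /=; exact: leqW.
case=> [lt|[eq [i [hi [lt H]]]]].
  exists n.+1; split => //; split => // j /andP[h1 h2]; move: (leq_trans h1 h2); by rewrite ltnn.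
exists i; split; first exact: leqW.
split => // j /andP[h1 h2]; move: h2; rewrite leq_eqVlt => /orP[/eqP -> //|jlt].
by apply: H; rewrite h1.
Qed.

Lemma lexv_monoR n (a b b' : nat -> nat) : lexv n a b -> (forall i, b i <= b' i) -> lexv n a b'.
Proof.
move=> + hb; elim: n => [|n IH].
  by rewrite !lexv_0 => lt; apply: leq_trans lt (hb 0).
rewrite !lexv_S => -[lt|[eq /IH h]]; first by left; apply: leq_trans lt (hb _).
case: (ltngtP (b n.+1) (b' n.+1)) (hb n.+1) => [lt _|//|<- _]; first by left; rewrite eq.
by right.
Qed.

Lemma lexv_monoL n (a a' b : nat -> nat) : lexv n a b -> (forall i, a' i <= a i) -> lexv n a' b.
Proof.
move=> + ha; elim: n => [|n IH].
  by rewrite !lexv_0 => lt; apply: leq_ltn_trans (ha 0) lt.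
rewrite !lexv_S => -[lt|[eq /IH h]]; first by left; apply: leq_ltn_trans (ha _) lt.
case: (ltngtP (a' n.+1) (a n.+1)) (ha n.+1) => [lt _|//|-> _]; first by left; rewrite -eq.
by right.
Qed.

Lemma lt_mixed (a b c d N : nat) : b < N -> d < N ->
  (a * N + b < c * N + d) <-> a < c \/ (a = c /\ b < d).
Proof.
move=> hb hd; rewrite ltnNge mixed //; split.
  case: (ltngtP c a) => [ca|ac|ea] /=; [by []|by left|].
  by rewrite -ltnNge ea => h; right.
case=> [ac|[-> bd]]; first by rewrite ltnNge (ltnW ac) /= eq_sym (ltn_eqF ac).
by rewrite ltnn eqxx /= -ltnNge.
Qed.

Section Z2.
Variable D : {fset default V}.
Definition cnt w := fun i => cntE (EL D i) w.

Lemma Zkey_ltP m v w : Zkey D m.+1 v < Zkey D m.+1 w <-> lexv m (cnt w) (cnt v).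
Proof.
have rl : forall i, rho (EL D i) v < rho (EL D i) w <-> cnt w i < cnt v i.
  move=> i; rewrite /rho /cnt; have := cntE_le (EL D i) v; have := cntE_le (EL D i) w.
  split; lia.
have re : forall i, rho (EL D i) v = rho (EL D i) w <-> cnt w i = cnt v i.
  move=> i; rewrite /rho /cnt; have := cntE_le (EL D i) v; have := cntE_le (EL D i) w.
  split; lia.
elim: m => [|m IH].
  rewrite lexv_0 /= !muln1 !addn0; exact: rl.
rewrite lexv_S; change (rho (EL D m.+1) v * ZN D m.+1 + Zkey D m.+1 v < rho (EL D m.+1) w * ZN D m.+1 + Zkey D m.+1 w <-> cnt w m.+1 < cnt v m.+1 \/ (cnt w m.+1 = cnt v m.+1 /\ lexv m (cnt w) (cnt v))).
rewrite (lt_mixed _ _ (Zkey_lt D m.+1 v) (Zkey_lt D m.+1 w)) IH -rl.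
split; case=> [h|[h1 h2]]; [by left|right|by left|right]; split => //; [exact/re|exact/re].
Qed.
End Z2.

Definition satD (D : {fset default V}) w : {fset default V} := [fset d in D | sat w (Imp d.1 d.2)].

Lemma satD_sub D w : satD D w `<=` D.
Proof. by apply/fsubsetP => d; rewrite /satD !inE => /andP[]. Qed.

Lemma satD_sat D w e : e \in imps (satD D w) -> sat w e.
Proof. by move=> /impsP [d]; rewrite /satD !inE => /andP[_ h] ->. Qed.

Lemma cnt_le_G G L w : (forall e, e \in imps G -> sat w e) ->
  #|` G `&` L| <= cntE (imps L) w.
Proof.
move=> H; rewrite -imps_card; apply: cntE_ge.
  apply/fsubsetP => e /impsP [d]; rewrite in_fsetI => /andP[_ dL] ->; exact: imps_in.
move=> e /impsP [d]; rewrite in_fsetI => /andP[dG _] ->; apply: H; exact: imps_in.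
Qed.

Lemma cnt_ge_sat D L w : L `<=` D -> cntE (imps L) w <= #|` satD D w `&` L|.
Proof.
move=> /fsubsetP sL; rewrite -imps_card; apply: fsubset_leq_card; apply/fsubsetP => e.
rewrite in_satset => /andP[/impsP [d dL ->] se]; apply: imps_in.
by rewrite in_fsetI dL andbT /satD !inE se sL.
Qed.

Lemma modelsP E f : reflect (forall w, (forall e, e \in E -> sat w e) -> sat w f) (models E f).
Proof.
apply: (iffP forallP) => [H w h|H w]; first by move/implyP: (H w); apply; apply/allP.
by apply/implyP => /allP; apply: H.
Qed.

Lemma consT E f : reflect (exists w, (forall e, e \in E -> sat w e) /\ sat w f)
  (consistent (E `|` [fset f])).
Proof.
apply: (iffP (consP _)) => [[w H]|[w [H1 H2]]].
  exists w; split; first by move=> e eE; apply: H; rewrite in_fsetU eE.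
  by apply: H; rewrite in_fsetU in_fset1 eqxx orbT.
exists w => e; rewrite in_fsetU in_fset1 => /orP[/H1 //|/eqP ->] //.
Qed.

Lemma Bel_domr R r f : same_rel R (domr r) ->
  (Bel R f <-> exists v, forall w, ~~ sat w f -> r v < r w).
Proof.
move=> sR.
have st : forall g, strict R (Bot V) g <-> exists v, forall w, ~~ sat w g -> r v < r w.
  move=> g; rewrite /strict !sR; split.
    move=> [_ H]; apply: NNPP => Hn; apply: H => v _.
    apply: NNPP => Hw; apply: Hn; exists v => w sw; rewrite ltnNge; apply/negP => le.
    by apply: Hw; exists w.
  move=> [v Hv]; split; first by move=> u su; exists u.
  move=> /(_ v isT) [w sw]; rewrite leqNgt => /negP; apply; exact: Hv.
rewrite /Bel st; split; last by move=> H _.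
by apply; exists (Top V); apply/st; exists w0 => w.
Qed.

Lemma rho1_sat f w : sat w f -> rho [fset f] w = 0.
Proof.
move=> sw; rewrite /rho; have := cntE_le [fset f] w.
have : #|` [fset f]| <= cntE [fset f] w.
  by apply: cntE_ge => // e; rewrite in_fset1 => /eqP ->.
by rewrite cardfs1; lia.
Qed.

Lemma rho1_nsat f w : ~~ sat w f -> rho [fset f] w = 1.
Proof.
move=> sw; rewrite /rho cardfs1.
have : cntE [fset f] w <= #|` (fset0 : {fset form V})|.
  apply: fsubset_leq_card; apply/fsubsetP => e; rewrite in_satset in_fset1.
  by move=> /andP[/eqP -> h]; rewrite h in sw.
by rewrite cardfs0; lia.
Qed.
End S.




Theorem corollary1 (V : finType) (D : {fset default V}) (n : nat) :
  consistent (imps D) ->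
  is_zpartition D n ->
  forall theta phi : form V,
    lex_entails D n theta phi <->
    Bel (Erev (zrev D n) (prec_gen [fset theta])) phi.
Proof.
move=> cD _ th ph.
Local Open Scope nat_scope.
have sZ : same_rel (zrev D n) (domr (Zkey D n.+1)) := zrev_char n.+1 cD.
have ZL := Zkey_lt D n.+1.
case: (boolP (consistent [fset th])) => cT; last first.
  have nt : forall w, ~~ sat w th.
    move=> w; apply/negP => sw; move/negP: cT; apply; apply/consP; exists w => e.
    by rewrite in_fset1 => /eqP ->.
  have triv := Erev_triv ZL sZ (fun a b => @prec_gen_incons _ _ a b cT).
  split => _.
    by move=> [g [_ h]]; exfalso; apply: h; apply: triv.
  by move=> G _ /consT [w [_ sw]]; rewrite (negbTE (nt w)) in sw.
have sF := Erev_full ZL (rho_lt [fset th]) sZ (prec_gen_char cT).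
rewrite (Bel_domr _ sF).
set K := fun w => rho [fset th] w * ZN D n.+1 + Zkey D n.+1 w.
have Kt : forall w, sat w th -> K w = Zkey D n.+1 w.
  by move=> w sw; rewrite /K rho1_sat.
have Kn : forall w, ~~ sat w th -> ZN D n.+1 <= K w.
  by move=> w sw; rewrite /K rho1_nsat // mul1n leq_addr.
have Klt : forall v w, sat v th -> sat w th -> K v < K w <-> lexv n (cnt D w) (cnt D v).
  by move=> v w sv sw; rewrite Kt // Kt // Zkey_ltP.
split.
  move=> H.
  have [t st] : exists t, sat t th.
    by case/consP: cT => t Ht; exists t; apply: Ht; rewrite in_fset1.
  have ex : exists k, [exists w, K w == k] by exists (K t); apply/existsP; exists t.
  case: (ex_minnP ex) => k /existsP [v /eqP Kv] kmin.
  have Kmin : forall u, K v <= K u.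
    by move=> u; rewrite Kv; apply: kmin; apply/existsP; exists u.
  exists v => w sw; rewrite ltnNge; apply/negP => le.
  have Kminw : forall u, K w <= K u by move=> u; apply: leq_trans le (Kmin u).
  have swt : sat w th.
    apply: contraT => nw; have := Kn w nw; have := Kminw t; rewrite (Kt t st) => h1 h2.
    by have := leq_trans h2 h1; rewrite leqNgt ZL.
  have Hm := H (satD D w) (satD_sub D w).
  have : models (imps (satD D w) `|` [fset th]) ph.
    apply: Hm; first by apply/consT; exists w; split => //; exact: satD_sat.
    move=> G' sG' /consT [w' [h1' sw']] hl.
    have hl0 : lexv n (fun i => #|` satD D w `&` zlayer D i|) (fun i => #|` G' `&` zlayer D i|) := hl.
    have hl' : lexv n (cnt D w) (cnt D w').
      apply: lexv_monoR (lexv_monoL hl0 _) _ => i.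
        exact: cnt_ge_sat (zlayer_sub D i).
      exact: cnt_le_G h1'.
    by have := (Klt w' w sw' swt).2 hl'; rewrite ltnNge Kminw.
  move/modelsP => /(_ w) h; move: sw; rewrite h // => e.
  rewrite in_fsetU in_fset1 => /orP[/satD_sat //|/eqP -> //].
move=> [v Hv] G sG cG Hmax; apply/modelsP => w Hw.
have swt : sat w th by apply: Hw; rewrite in_fsetU in_fset1 eqxx orbT.
have hG : forall e, e \in imps G -> sat w e by move=> e eG; apply: Hw; rewrite in_fsetU eG.
apply: contraT => sw.
have Kvw : K v < K w := Hv w sw.
have svt : sat v th.
  apply: contraT => nv; have := Kn v nv; move: Kvw; rewrite (Kt w swt) => h1 h2.
  by have := leq_ltn_trans (leq_trans h2 (ltnW h1)) (ZL w); rewrite ltnn.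
have hl := (Klt v w svt swt).1 Kvw.
exfalso; apply: (Hmax (satD D v) (satD_sub D v)); first by apply/consT; exists v; split => //; exact: satD_sat.
change (lexv n (fun i => #|` G `&` zlayer D i|) (fun i => #|` satD D v `&` zlayer D i|)).
apply: lexv_monoR (lexv_monoL hl _) _ => i; first exact: cnt_le_G hG.
exact: cnt_ge_sat (zlayer_sub D i).
Qed.
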